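(* Suppose $\mu>0$ satisfies $\mu/2\le v_{\max}<\mu$, where $v_{\max}$ is the largest value $v_i(S)$ over all bidders $i$ and $S\in\mathcal S_i$. Then the multiplicative price update algorithm with $p_0=\frac{\mu}{4bm}$ and $r=(4bm)^{1/b}$, run on truthful input, outputs an allocation $S$ in which every good is allocated at most $b$ times, and $$v(S)\ge\frac{\mathrm{OPT}}{2(b(r-1)+1)}\ge \frac{\mathrm{OPT}}{O(b\, m^{1/b})}.$$
   Context: Multi-unit combinatorial auction: a set $\mathsf U$ of $m$ goods, each available in $b\ge1$ copies; $n$ bidders, bidder $i$ having a collection $\mathcal S_i$ of $k$ nonempty subsets of $\mathsf U$ and valuation $v_i:\mathcal S_i\to\mathbb R_{\ge0}$, extended to all $T\subseteq\mathsf U$ by $v_i(T)=\max\{v_i(S'):S'\in\mathcal S_i, S'\subseteq T\}$ ($0$ if none). $v(S)=\sum_i v_i(S_i)$ and $\mathrm{OPT}$ is the maximum of $\sum_i v_i(T_i)$ over allocations in which every good belongs to at most $b$ sets. Multiplicative price update algorithm (parameters $p_0,r$): set $p_e^1=p_0$ for all goods $e$; for $i=1,\dots,n$ in a fixed order: let $S_i$ be a set maximizing $v_i(S)$ among $S\in\mathcal S_i$ with $v_i(S)\ge\sum_{e\in S}p_e^i$ ($S_i=\emptyset$ if none); set $p_e^{i+1}=r\,p_e^i$ for $e\in S_i$, $p_e^{i+1}=p_e^i$ otherwise; output $(S_1,\dots,S_n)$. *)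

(* Defs.v *)
From Stdlib Require Import Reals.
From mathcomp Require Import all_boot.
Set Implicit Arguments. Unset Strict Implicit. Unset Printing Implicit Defensive.

Section Auction.
(* m goods ('I_m), n bidders ('I_n, processed in the order 0,1,...,n-1). *)
Variables (m n : nat).

(* An instance: each bidder i has a collection coll i of subsets of goods and a
   valuation v i (only its values on coll i matter). *)
Variable coll : 'I_n -> {set {set 'I_m}}.
Variable v : 'I_n -> {set 'I_m} -> R.

Definition vext (i : 'I_n) (T : {set 'I_m}) : R :=
  \big[Rmax/R0]_(S' in coll i | S' \subset T) v i S'.

Definition welfare (A : 'I_n -> {set 'I_m}) : R :=
  \big[Rplus/R0]_(i : 'I_n) vext i (A i).

Definition feasible (b : nat) (A : 'I_n -> {set 'I_m}) : Prop :=
  forall e : 'I_m, #|[set i : 'I_n | e \in A i]| <= b.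

(* OPT = maximum welfare over feasible allocations (finite max; 0 is attained
   by the empty allocation, and all values are >= 0). *)
Definition OPT (b : nat) : R :=
  \big[Rmax/R0]_(T : {ffun 'I_n -> {set 'I_m}} | [forall e : 'I_m,
      #|[set i : 'I_n | e \in T i]| <= b]) welfare T.

Definition vmax : R := \big[Rmax/R0]_(i : 'I_n) \big[Rmax/R0]_(S in coll i) v i S.

Definition at_nat (A : 'I_n -> {set 'I_m}) (j : nat) : {set 'I_m} :=
  if insub j is Some i then A i else set0.

(* price of good e seen by the bidder with (0-based) index i:
   p^1 = p0 ; p^{i+1}_e = r p^i_e if e in S_i, else p^i_e. *)
Fixpoint price (p0 r : R) (A : 'I_n -> {set 'I_m}) (i : nat) (e : 'I_m) : R :=
  match i with
  | 0 => p0
  | i'.+1 => if e \in at_nat A i' then Rmult r (price p0 r A i' e)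
             else price p0 r A i' e
  end.

Definition set_price (p0 r : R) (A : 'I_n -> {set 'I_m}) (i : nat) (S : {set 'I_m}) : R :=
  \big[Rplus/R0]_(e in S) price p0 r A i e.

(* A is an output of the multiplicative price update algorithm with parameters
   p0, r (with any tie-breaking among maximizing sets): for each bidder i, with
   the current prices, S_i is a set of maximum value among the affordable sets
   of S_i (v_i(S) >= sum of prices), or S_i is empty if there is none. *)
Definition mpu_output (p0 r : R) (A : 'I_n -> {set 'I_m}) : Prop :=
  forall i : 'I_n,
    let afford S := Rle (set_price p0 r A i S) (v i S) in
    (A i = set0 /\ (forall S, S \in coll i -> ~ afford S)) \/
    (A i \in coll i /\ afford (A i) /\
     (forall S, S \in coll i -> afford S -> Rle (v i S) (v i (A i)))).

End Auction.

(* Main.v *)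
Require Import Defs.
From Stdlib Require Import Reals Lra.
From mathcomp Require Import all_boot.
From HB Require Import structures.

HB.instance Definition _ := Monoid.isComLaw.Build R R0 Rplus
  (fun x y z => esym (Rplus_assoc x y z)) Rplus_comm Rplus_0_l.

Local Open Scope R_scope.

Section Gen.
Variables (I : eqType).

Lemma sR_le (s : seq I) (P : pred I) (F G : I -> R) :
  (forall i, P i -> F i <= G i) ->
  \big[Rplus/0]_(i <- s | P i) F i <= \big[Rplus/0]_(i <- s | P i) G i.
Proof.
move=> H; elim: s => [|x s IH]; first by rewrite !big_nil; lra.
rewrite !big_cons; case: ifP => Px //; have := H x Px; lra.
Qed.

Lemma sR_ge0 (s : seq I) (P : pred I) (F : I -> R) :
  (forall i, P i -> 0 <= F i) -> 0 <= \big[Rplus/0]_(i <- s | P i) F i.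
Proof.
move=> H; elim: s => [|x s IH]; first by rewrite !big_nil; lra.
rewrite !big_cons; case: ifP => Px //; have := H x Px; lra.
Qed.

Lemma sR_sub (s : seq I) (P Q : pred I) (F : I -> R) :
  (forall i, 0 <= F i) -> (forall i, P i -> Q i) ->
  \big[Rplus/0]_(i <- s | P i) F i <= \big[Rplus/0]_(i <- s | Q i) F i.
Proof.
move=> H0 H; elim: s => [|x s IH]; first by rewrite !big_nil; lra.
rewrite !big_cons; case: ifP => Px; first by rewrite (H x Px); lra.
case: ifP => _ //; have := H0 x; lra.
Qed.

Lemma sR_term (s : seq I) (P : pred I) (F : I -> R) x :
  (forall i, 0 <= F i) -> x \in s -> P x ->
  F x <= \big[Rplus/0]_(i <- s | P i) F i.
Proof.
move=> H0; elim: s => [|y s IH] //; rewrite in_cons big_cons => /orP [/eqP ->|xs] Px.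
  rewrite Px; have := sR_ge0 s P F (fun i _ => H0 i); lra.
have := IH xs Px; case: ifP => _ //; have := H0 y; lra.
Qed.

Lemma sR_scale (s : seq I) (P : pred I) (F : I -> R) c :
  \big[Rplus/0]_(i <- s | P i) (c * F i) = c * \big[Rplus/0]_(i <- s | P i) F i.
Proof.
elim: s => [|x s IH]; first by rewrite !big_nil; ring.
rewrite !big_cons; case: ifP => _; rewrite IH //; ring.
Qed.

Lemma sR_if (s : seq I) (Q : pred I) c :
  \big[Rplus/0]_(i <- s) (if Q i then c else 0) = INR (count Q s) * c.
Proof.
elim: s => [|x s IH]; first by rewrite !big_nil /=; ring.
rewrite big_cons IH; change (count Q (x::s)) with (Q x + count Q s)%N.
case: (Q x); rewrite ?add1n ?add0n ?S_INR; ring.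
Qed.

Lemma sR_mul_split (s : seq I) (Q : pred I) (F : I -> R) r :
  \big[Rplus/0]_(i <- s) (if Q i then r * F i else F i) =
  \big[Rplus/0]_(i <- s) F i + (r - 1) * \big[Rplus/0]_(i <- s | Q i) F i.
Proof.
elim: s => [|x s IH]; first by rewrite !big_nil /=; ring.
rewrite !big_cons IH; case: (Q x); ring.
Qed.

Lemma mR_ge (s : seq I) (P : pred I) (F : I -> R) x :
  x \in s -> P x -> F x <= \big[Rmax/0]_(i <- s | P i) F i.
Proof.
elim: s => [|y s IH] //; rewrite in_cons big_cons => /orP [/eqP ->|xs] Px.
  rewrite Px; apply: Rmax_l.
have := IH xs Px; case: ifP => _ //; have := Rmax_r (F y) (\big[Rmax/0]_(i <- s | P i) F i); lra.
Qed.

Lemma mR_le (s : seq I) (P : pred I) (F : I -> R) y :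
  0 <= y -> (forall i, P i -> F i <= y) -> \big[Rmax/0]_(i <- s | P i) F i <= y.
Proof.
move=> y0 H; elim: s => [|x s IH]; first by rewrite big_nil.
rewrite big_cons; case: ifP => Px //; apply: Rmax_lub => //; exact: H.
Qed.

Lemma mR_ge0 (s : seq I) (P : pred I) (F : I -> R) :
  0 <= \big[Rmax/0]_(i <- s | P i) F i.
Proof.
elim: s => [|x s IH]; first by rewrite big_nil; lra.
rewrite big_cons; case: ifP => Px //; have := Rmax_r (F x) (\big[Rmax/0]_(i <- s | P i) F i); lra.
Qed.

Lemma mR_ex (s : seq I) (P : pred I) (F : I -> R) y :
  0 < y -> y <= \big[Rmax/0]_(i <- s | P i) F i -> exists i, P i /\ y <= F i.
Proof.
move=> y0; elim: s => [|x s IH]; first by rewrite big_nil; lra.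
rewrite big_cons; case: ifP => Px // H.
case: (Rle_dec y (F x)) => Hx; first by exists x.
apply: IH; move: H; rewrite /Rmax; case: Rle_dec => _; lra.
Qed.
End Gen.

Lemma card_count (T: finType) (Q: pred T) : #|[set i | Q i]| = count Q (index_enum T).
Proof. by rewrite cardsE -sum1_card -sum1_count. Qed.
Lemma count_ord m : count predT (index_enum 'I_m) = m.
Proof. have := @card_count _ (@predT (ordinal m)). by rewrite cardsT card_ord. Qed.

Section Main.
Variables (m n b : nat) (coll : 'I_n -> {set {set 'I_m}}) (v : 'I_n -> {set 'I_m} -> R)
  (mu p0 r : R) (A : 'I_n -> {set 'I_m}).
Hypothesis Hb : (1 <= b)%N.
Hypothesis Hne : forall i S, S \in coll i -> S != set0.
Hypothesis Hv0 : forall i S, S \in coll i -> 0 <= v i S.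
Hypothesis Hvlt : forall i S, S \in coll i -> v i S < mu.
Hypothesis Hp0 : 0 < p0.
Hypothesis Hr : 1 <= r.
Hypothesis Hrb : p0 * r ^ b = mu.
Hypothesis Hm : INR b * (INR m * p0) <= mu / 4.
Hypothesis Hmax : exists i S, S \in coll i /\ mu / 2 <= v i S.
Hypothesis Hout : mpu_output coll v p0 r A.

Notation pr := (price p0 r A).
Notation sp := (set_price p0 r A).

Lemma price_pos i e : 0 < pr i e.
Proof.
elim: i => [|i IH] //=; case: ifP => _ //; apply: Rmult_lt_0_compat => //; lra.
Qed.

Lemma price_mono i j e : (i <= j)%N -> pr i e <= pr j e.
Proof.
elim: j => [|j IH]; first by rewrite leqn0 => /eqP ->; lra.
rewrite leq_eqVlt => /orP [/eqP ->|]; first lra.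
rewrite ltnS => /IH H /=; case: ifP => _ //.
have := price_pos j e; nra.
Qed.

Lemma sp_ge0 i (S : {set 'I_m}) : 0 <= sp i S.
Proof. apply: sR_ge0 => e _; have := price_pos i e; lra. Qed.

Lemma sp_mono i j (S : {set 'I_m}) : (i <= j)%N -> sp i S <= sp j S.
Proof. move=> H; apply: sR_le => e _; exact: price_mono. Qed.

Lemma sp_sub i (S T : {set 'I_m}) : S \subset T -> sp i S <= sp i T.
Proof.
move/subsetP=> H; apply: sR_sub => //; move=> e; have := price_pos i e; lra.
Qed.

Definition cnt i e := (\sum_(0 <= j < i) (e \in at_nat A j))%N.

Lemma price_cnt i e : pr i e = p0 * r ^ cnt i e.
Proof.
elim: i => [|i IH]; first by rewrite /cnt big_geq //=; ring.
rewrite /cnt big_nat_recr //= -/(cnt i e) IH; case: (e \in at_nat A i).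
  rewrite addn1 /=; ring.
by rewrite addn0.
Qed.

Lemma cnt_le i e : (cnt i e <= b)%N.
Proof.
elim: i => [|i IH]; first by rewrite /cnt big_geq.
rewrite /cnt big_nat_recr //= -/(cnt i e).
case Hin: (e \in at_nat A i); last by rewrite addn0.
rewrite addn1; move: Hin; rewrite /at_nat; case: insubP => [ii _ Hii|_]; last by rewrite in_set0.
move=> Hin.
case: (Hout ii) => [[H0 _]|[Hc [Haff _]]]; first by rewrite H0 in_set0 in Hin.
have H1 : pr i e <= sp ii (A ii).
  rewrite Hii; apply: (@sR_term _ _ _ (pr i) e) => //; last exact: mem_index_enum.
  move=> x; have := price_pos i x; lra.
have H2 := Hvlt ii (A ii) Hc.
rewrite ltnNge; apply/negP => Hbc.
have H3 : r ^ b <= r ^ cnt i e by apply: Rle_pow => //; apply/leP.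
rewrite price_cnt in H1.
have : p0 * r ^ b <= p0 * r ^ cnt i e by apply: Rmult_le_compat_l; lra.
rewrite /set_price in Haff; rewrite /set_price in H1; lra.
Qed.

Lemma feas : feasible b A.
Proof.
move=> e; have := cnt_le n e; rewrite /cnt big_mkord card_count -sum1_count.
suff -> : (\sum_(j < n | e \in A j) 1 = \sum_(i < n) (e \in at_nat A i))%N by [].
rewrite big_mkcond; apply: eq_bigr => i _; rewrite /at_nat valK; by case: (e \in A i).
Qed.

Definition g (j : nat) : R :=
  oapp (fun jj : 'I_n => vext coll v jj (A jj)) 0 (insub j).

Lemma vext_ge0 i T : 0 <= vext coll v i T.
Proof. exact: mR_ge0. Qed.

Lemma vext_ge i (S T : {set 'I_m}) : S \in coll i -> S \subset T -> v i S <= vext coll v i T.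
Proof. move=> H1 H2; apply: mR_ge; [exact: mem_index_enum| by rewrite H1 H2]. Qed.

Lemma g_ge0 j : 0 <= g j.
Proof. rewrite /g; case: insubP => [jj _ _|_] /=; [exact: vext_ge0| lra]. Qed.

Lemma sp_at i : sp i (at_nat A i) <= g i.
Proof.
rewrite /at_nat /g; case: insubP => [ii _ Hii|_] /=; last first.
  rewrite /set_price big_pred0; [lra| by move=> e; rewrite in_set0].
case: (Hout ii) => [[H0 _]|[Hc [Haff _]]].
  rewrite H0 /set_price big_pred0; [exact: vext_ge0| by move=> e; rewrite in_set0].
have := vext_ge ii (A ii) (A ii) Hc (subxx _).
rewrite -Hii /=; rewrite /set_price in Haff *. lra.
Qed.

Definition TP i := \big[Rplus/0]_(e : 'I_m) pr i e.

Lemma TP_bound i : TP i <= INR m * p0 + (r - 1) * \big[Rplus/0]_(0 <= j < i) g j.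
Proof.
elim: i => [|i IH].
  rewrite big_geq // /TP.
  have := sR_if _ (index_enum 'I_m) predT p0; rewrite count_ord => <-.
  have -> : \big[Rplus/0]_(e : 'I_m) pr 0 e = \big[Rplus/0]_(e <- index_enum 'I_m) (if predT e then p0 else 0).
    by apply: eq_bigr.
  lra.
rewrite big_nat_recr //= /TP /=.
rewrite sR_mul_split -/(TP i).
rewrite -/(sp i (at_nat A i)).
have Hs := sp_at i; have := g_ge0 i; nra.
Qed.


Lemma welfare_g : welfare coll v A = \big[Rplus/0]_(0 <= j < n) g j.
Proof.
rewrite big_mkord /welfare; apply: eq_bigr => i _; by rewrite /g valK.
Qed.

Lemma bidder i (T : {set 'I_m}) : vext coll v i T <= vext coll v i (A i) + sp n T.
Proof.
have H0 := vext_ge0 i (A i); have H1 := sp_ge0 n T.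
apply: mR_le; first lra.
move=> S /andP [Hc Hsub].
have Hnot : ~ (sp i S <= v i S) -> v i S <= vext coll v i (A i) + sp n T.
  move=> Hn; have := sp_mono i n S (ltnW (ltn_ord i)); have := sp_sub n S T Hsub; lra.
case: (Hout i) => [[_ Hna]|[Hc' [_ Hbest]]]; first exact: Hnot (Hna S Hc).
case: (Rle_dec (sp i S) (v i S)) => Ha; last exact: Hnot.
have := Hbest S Hc Ha; have := vext_ge i (A i) (A i) Hc' (subxx _); lra.
Qed.

Lemma sum_sp (T : {ffun 'I_n -> {set 'I_m}}) :
  (forall e, #|[set i | e \in T i]| <= b)%N ->
  \big[Rplus/R0]_(i : 'I_n) sp n (T i) <= INR b * TP n.
Proof.
move=> HT.
have -> : \big[Rplus/R0]_(i : 'I_n) sp n (T i) = \big[Rplus/0]_(i <- index_enum 'I_n)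
   \big[Rplus/0]_(e <- index_enum 'I_m) (if e \in T i then pr n e else 0).
  apply: eq_bigr => i _; rewrite /set_price big_mkcond; by [].
rewrite exchange_big /TP -sR_scale; apply: sR_le => e _.
rewrite (sR_if _ _ (fun i => e \in T i)) -(@card_count _ (fun i => e \in T i)).
apply: Rmult_le_compat_r; first by have := price_pos n e; lra.
by apply: le_INR; apply/leP; exact: HT.
Qed.

Lemma alg_ge0 : 0 <= welfare coll v A.
Proof. apply: sR_ge0 => i _; exact: vext_ge0. Qed.

Lemma TP_final : TP n <= INR m * p0 + (r - 1) * welfare coll v A.
Proof. rewrite welfare_g; exact: TP_bound. Qed.

Lemma mp0 : INR m * p0 <= mu / 4.
Proof.
have Hb1 : 1 <= INR b by apply: (le_INR 1); apply/leP.
have : 0 <= INR m * p0 by apply: Rmult_le_pos; [exact: pos_INR | lra].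
nra.
Qed.

Lemma key : mu / 2 <= welfare coll v A \/ mu / 4 <= (r - 1) * welfare coll v A.
Proof.
case: Hmax => [i [S [Hc Hv]]].
have Hnot : ~ (sp i S <= v i S) -> mu / 4 <= (r - 1) * welfare coll v A.
  move=> Hn.
  have H1 := sp_mono i n S (ltnW (ltn_ord i)).
  have H2 : sp n S <= TP n.
    by apply: (sR_sub _ _ _ (fun _ => true)) => // e; have := price_pos n e; lra.
  have := TP_final; have := mp0; lra.
have Hterm : vext coll v i (A i) <= welfare coll v A.
  apply: (@sR_term _ _ _ (fun i => vext coll v i (A i)) i) => //; last exact: mem_index_enum.
  move=> j; exact: vext_ge0.
case: (Hout i) => [[_ Hna]|[Hc' [_ Hbest]]]; first by right; exact: Hnot (Hna S Hc).
case: (Rle_dec (sp i S) (v i S)) => Ha; last by right; exact: Hnot.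
left; have := Hbest S Hc Ha; have := vext_ge i (A i) (A i) Hc' (subxx _); lra.
Qed.

Lemma main_bound : OPT coll v b <= 2 * (INR b * (r - 1) + 1) * welfare coll v A.
Proof.
have Hb1 : 1 <= INR b by apply: (le_INR 1); apply/leP.
have H0 := alg_ge0.
have HK : 0 <= INR b * (r - 1) by apply: Rmult_le_pos; lra.
have Hk : mu / 4 <= (INR b * (r - 1) + 1) * welfare coll v A.
  case: key => H; first nra.
  have : (r - 1) * welfare coll v A <= INR b * (r - 1) * welfare coll v A.
    apply: Rmult_le_compat_r => //; nra.
  nra.
apply: mR_le; first nra.
move=> T /forallP HT.
have H1 : welfare coll v T <= welfare coll v A + \big[Rplus/R0]_(i : 'I_n) sp n (T i).
  rewrite /welfare -big_split /=; apply: sR_le => i _; exact: bidder.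
have H2 := sum_sp T HT.
have H3 := TP_final.
have H4 : INR b * TP n <= INR b * (INR m * p0 + (r - 1) * welfare coll v A).
  apply: Rmult_le_compat_l => //; lra.
rewrite Rmult_plus_distr_l in H4.
have E : INR b * ((r - 1) * welfare coll v A) = INR b * (r - 1) * welfare coll v A by ring.
rewrite E in H4.
have E2 : 2 * (INR b * (r - 1) + 1) * welfare coll v A = (INR b * (r - 1) + 1) * welfare coll v A + (INR b * (r - 1) * welfare coll v A + welfare coll v A) by ring.
rewrite E2; apply: (Rle_trans _ _ _ H1). have H5 := Rle_trans _ _ _ H2 H4. have Hm' := Hm. move: H5 Hm' Hk.
set X := \big[Rplus/R0]_(i < n) sp n (T i). set W := welfare coll v A. set B := INR b.
move=> *. nra.
Qed.
End Main.

Lemma div_le X Y W : 0 < Y -> X <= Y * W -> X / Y <= W.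
Proof.
move=> HY H; have HYi : 0 < / Y by apply: Rinv_0_lt_compat.
have := Rmult_le_compat_r (/ Y) _ _ (Rlt_le _ _ HYi) H.
have -> : Y * W * / Y = W by field; lra.
by [].
Qed.

Lemma div_anti X Y1 Y2 : 0 <= X -> 0 < Y1 -> Y1 <= Y2 -> X / Y2 <= X / Y1.
Proof.
move=> HX H1 H2; apply: Rmult_le_compat_l => //; exact: Rinv_le_contravar.
Qed.

Lemma pow4 b : (1 <= b)%N -> 4 * INR b <= 4 ^ b.
Proof.
elim: b => [|b IH] // _.
case: b IH => [|b] IH; first by simpl; lra.
have H := IH isT. rewrite S_INR.
have : 1 <= INR b.+1 by apply: (le_INR 1); apply/leP.
change (4 ^ b.+2) with (4 * 4 ^ b.+1). lra.
Qed.

Lemma Rpower_pos x y : 0 < Rpower x y.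
Proof. rewrite /Rpower; exact: exp_pos. Qed.

Local Close Scope R_scope.

Theorem theorem3 :
  exists C : R, Rlt 0 C /\
  forall (m n k b : nat) (coll : 'I_n -> {set {set 'I_m}})
         (v : 'I_n -> {set 'I_m} -> R) (mu : R),
    1 <= b ->
    (forall i : 'I_n, #|coll i| = k) ->
    (forall i : 'I_n, forall S, S \in coll i -> S != set0) ->
    (forall i : 'I_n, forall S, S \in coll i -> Rle 0 (v i S)) ->
    Rlt 0 mu ->
    Rle (Rdiv mu 2) (vmax coll v) -> Rlt (vmax coll v) mu ->
    let p0 := Rdiv mu (Rmult (Rmult 4 (INR b)) (INR m)) in
    let r := Rpower (Rmult (Rmult 4 (INR b)) (INR m)) (Rinv (INR b)) in
    forall A : 'I_n -> {set 'I_m},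
      mpu_output coll v p0 r A ->
      feasible b A /\
      Rle (Rdiv (OPT coll v b) (Rmult 2 (Rplus (Rmult (INR b) (Rminus r 1)) 1)))
          (welfare coll v A) /\
      Rle (Rdiv (OPT coll v b) (Rmult (Rmult C (INR b)) (Rpower (INR m) (Rinv (INR b)))))
          (Rdiv (OPT coll v b) (Rmult 2 (Rplus (Rmult (INR b) (Rminus r 1)) 1))).
Proof.
Local Open Scope R_scope.
exists 8; split; first lra.
move=> m n k b coll v mu Hb _ Hne Hv0 Hmu Hlo Hhi p0 r A Hout.
have Hmax : exists i S, S \in coll i /\ mu / 2 <= v i S.
  have [i [_ Hi]] := mR_ex _ _ _ _ (mu / 2) ltac:(lra) Hlo.
  have [S [HS HS']] := mR_ex _ _ _ _ (mu / 2) ltac:(lra) Hi.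
  by exists i, S.
have Hvlt : forall i S, S \in coll i -> v i S < mu.
  move=> i S HS.
  have H1 : v i S <= \big[Rmax/R0]_(S in coll i) v i S.
    by apply: mR_ge => //; exact: mem_index_enum.
  have H2 : \big[Rmax/R0]_(S in coll i) v i S <= vmax coll v.
    by apply: (@mR_ge _ _ _ (fun i => \big[Rmax/R0]_(S in coll i) v i S)) => //; exact: mem_index_enum.
  lra.
have Hm1 : (0 < m)%N.
  case: Hmax => [i [S [HS _]]]; have := Hne i S HS; case/set0Pn => x _.
  exact: leq_ltn_trans (leq0n x) (ltn_ord x).
have Hb1 : 1 <= INR b by apply: (le_INR 1); apply/leP.
have Hmm : 1 <= INR m by apply: (le_INR 1); apply/leP.
have HN : 4 <= 4 * INR b * INR m by nra.
have Hp0 : 0 < p0 by rewrite /p0; apply: Rdiv_lt_0_compat; lra.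
have Hbn0 : INR b <> 0 by lra.
have Hr0 : 0 < r by exact: Rpower_pos.
have Hr : 1 <= r.
  rewrite /r -(Rpower_O (4 * INR b * INR m)); last lra.
  apply: Rle_Rpower; first lra.
  by apply: Rlt_le; apply: Rinv_0_lt_compat; lra.
have Hrb : p0 * r ^ b = mu.
  rewrite -Rpower_pow // /r Rpower_mult Rinv_l // Rpower_1; last lra.
  rewrite /p0; field; lra.
have Hm : INR b * (INR m * p0) <= mu / 4.
  rewrite /p0; right; field; lra.
have Hfeas : feasible b A by apply: (@feas m n b coll v mu p0 r A).
have Hmain : OPT coll v b <= 2 * (INR b * (r - 1) + 1) * welfare coll v A by apply: (@main_bound m n b coll v mu p0 r A).
have HK : 0 < 2 * (INR b * (r - 1) + 1) by nra.
split => //; split; first exact: div_le.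
apply: div_anti => //; first exact: mR_ge0.
have Hr4 : r = Rpower (4 * INR b) (/ INR b) * Rpower (INR m) (/ INR b).
  rewrite Rpower_mult_distr //; lra.
have H4 : Rpower (4 * INR b) (/ INR b) <= 4.
  have E : 4 = Rpower (Rpower 4 (INR b)) (/ INR b).
    rewrite Rpower_mult Rinv_r // Rpower_1 //; lra.
  rewrite [X in _ <= X]E; apply: Rle_Rpower_l.
    by apply: Rlt_le; apply: Rinv_0_lt_compat; lra.
  split; first lra.
  rewrite Rpower_pow; last lra. exact: pow4.
have Hpm := Rpower_pos (INR m) (/ INR b).
have H4' := Rpower_pos (4 * INR b) (/ INR b).
have : r <= 4 * Rpower (INR m) (/ INR b) by rewrite Hr4; nra.
nra.
Qed.
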